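(* Let $N\ge 1$, let $A\in\{0,1\}^{N\times N}$ be the symmetric adjacency matrix of an undirected graph (the top layer) and let $L\in\mathbb{R}^{N\times N}$ be the (symmetric) Laplacian matrix of an undirected graph (the bottom layer) on the node set $[N]=\{1,\dots,N\}$. Let $K=\mathrm{diag}(\kappa_1,\dots,\kappa_N)$ with each $\kappa_i\in\{0,1\}$. Let $\mathcal{G}_{\mathfrak{T}}$ be the group of $N\times N$ permutation matrices $P$ with $PA=AP$, let $\mathcal{G}_{\mathfrak{B}}$ be the group of $N\times N$ permutation matrices $P$ with $PL=LP$, and let $$\mathcal{G}=\Big\{\begin{pmatrix}P_{\mathfrak{T}}&0\\0&P_{\mathfrak{B}}\end{pmatrix}: P_{\mathfrak{T}}\in\mathcal{G}_{\mathfrak{T}},\ P_{\mathfrak{B}}\in\mathcal{G}_{\mathfrak{B}},\ P_{\mathfrak{B}}K=KP_{\mathfrak{T}}\Big\}.$$ Let $\{\mathcal{K}_{\mathfrak{T}}^j\}_{j=1}^{k_{\mathfrak{T}}}$ and $\{\mathcal{K}_{\mathfrak{B}}^l\}_{l=1}^{k_{\mathfrak{B}}}$ be the partitions of $[N]$ into orbits of $\mathcal{G}$ acting (through the $P_{\mathfrak{T}}$ block, respectively the $P_{\mathfrak{B}}$ block) on $[N]$. Let $E_{\mathfrak{T}}\in\mathbb{R}^{N\times k_{\mathfrak{T}}}$ be the matrix with $(E_{\mathfrak{T}})_{ij}=1$ if $i\in\mathcal{K}_{\mathfrak{T}}^j$ and $0$ otherwise, and similarly $E_{\mathfrak{B}}\in\mathbb{R}^{N\times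 k_{\mathfrak{B}}}$; let $\Pi_{\mathfrak{T}}=E_{\mathfrak{T}}(E_{\mathfrak{T}}^*E_{\mathfrak{T}})^{-1}E_{\mathfrak{T}}^*$ and $\Pi_{\mathfrak{B}}=E_{\mathfrak{B}}(E_{\mathfrak{B}}^*E_{\mathfrak{B}})^{-1}E_{\mathfrak{B}}^*$ be the orthogonal projections onto the column spaces of $E_{\mathfrak{T}}$ and $E_{\mathfrak{B}}$. Let $\{v_{\mathfrak{T}}^i\}_{i\in[N]}$ and $\{v_{\mathfrak{B}}^i\}_{i\in[N]}$ be orthonormal eigenbases of $\Pi_{\mathfrak{T}}$ and $\Pi_{\mathfrak{B}}$, ordered so that $v_{\mathfrak{T}}^1,\dots,v_{\mathfrak{T}}^{k_{\mathfrak{T}}}$ span the column space of $E_{\mathfrak{T}}$ and $v_{\mathfrak{B}}^1,\dots,v_{\mathfrak{B}}^{k_{\mathfrak{B}}}$ span the column space of $E_{\mathfrak{B}}$ (the remaining vectors spanning the respective kernels), and set $T_{\mathfrak{T}}=[v_{\mathfrak{T}}^1,\dots,v_{\mathfrak{T}}^N]$, $T_{\mathfrak{B}}=[v_{\mathfrak{B}}^1,\dots,v_{\mathfrak{B}}^N]$. Then $B=T_{\mathfrak{T}}^*AT_{\mathfrak{T}}$ and $M=T_{\mathfrak{B}}^*LT_{\mathfrak{B}}$ are block-diagonal, $$B=\begin{pmatrix}B^{\parallel}&0\\0&B^{\perp}\end{pmatrix},\qquad M=\begin{pmatrix}M^{\parallel}&0\\0&M^{\perp}\end{pmatrix},$$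 with $B^{\parallel}\in\mathbb{R}^{k_{\mathfrak{T}}\times k_{\mathfrak{T}}}$, $B^{\perp}\in\mathbb{R}^{(N-k_{\mathfrak{T}})\times(N-k_{\mathfrak{T}})}$, $M^{\parallel}\in\mathbb{R}^{k_{\mathfrak{B}}\times k_{\mathfrak{B}}}$, $M^{\perp}\in\mathbb{R}^{(N-k_{\mathfrak{B}})\times(N-k_{\mathfrak{B}})}$.
   Context: This concerns a duplex network of two layers on the same node set $[N]$: a top layer with adjacency matrix $A$ and a bottom layer with Laplacian $L$, with directed one-to-one inter-layer links from top node $i$ to bottom node $i$ present exactly when $\kappa_i=1$. The sets $\mathcal{K}_{\mathfrak{T}}^j$, $\mathcal{K}_{\mathfrak{B}}^l$ are called the clusters of the top and bottom layer. $E^*$ denotes the transpose. *)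

(* Defs.v *)
From HB Require Import structures.
From mathcomp Require Import all_boot all_order all_algebra all_fingroup.
Set Implicit Arguments. Unset Strict Implicit. Unset Printing Implicit Defensive.
Import Order.TTheory GRing.Theory Num.Theory.
Local Open Scope ring_scope.

Section Duplex.
Variables (R : realFieldType) (N : nat).

Definition is_adjacency (W : 'M[R]_N) : Prop :=
  W^T = W /\ forall i j, W i j = 0 \/ W i j = 1.

Definition laplacian (W : 'M[R]_N) : 'M[R]_N :=
  diag_mx (\row_i (\sum_k W i k)) - W.

Definition coupling (kappa : 'I_N -> bool) : 'M[R]_N :=
  diag_mx (\row_i (kappa i)%:R).

(* the symmetry group G, as the set of pairs (s_T, s_B) with
   P_T = perm_mx s_T, P_B = perm_mx s_B *)
Definition symgroup (A L K : 'M[R]_N) : {set 'S_N * 'S_N} :=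
  [set p : 'S_N * 'S_N |
     [&& perm_mx p.1 *m A == A *m perm_mx p.1,
         perm_mx p.2 *m L == L *m perm_mx p.2 &
         perm_mx p.2 *m K == K *m perm_mx p.1]].

Definition orbitT (A L K : 'M[R]_N) (i : 'I_N) : {set 'I_N} :=
  [set fun_of_perm p.1 i | p in symgroup A L K].
Definition orbitB (A L K : 'M[R]_N) (i : 'I_N) : {set 'I_N} :=
  [set fun_of_perm p.2 i | p in symgroup A L K].

Definition clustersT A L K : {set {set 'I_N}} := [set orbitT A L K i | i : 'I_N].
Definition clustersB A L K : {set {set 'I_N}} := [set orbitB A L K i | i : 'I_N].

Definition indicator (P : {set {set 'I_N}}) : 'M[R]_(N, #|P|) :=
  \matrix_(i < N, j < #|P|) ((i \in enum_val (A := mem P) j) : bool)%:R.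

Definition proj_of (k : nat) (E : 'M[R]_(N, k)) : 'M[R]_N :=
  E *m invmx (E^T *m E) *m E^T.

(* T has orthonormal columns, each an eigenvector of Pi, and its first k
   columns span the column space of E *)
Definition adapted_basis (k : nat) (E : 'M[R]_(N, k)) (T : 'M[R]_N) : Prop :=
  [/\ T^T *m T = 1%:M,
      (forall j : 'I_N, exists lam : R,
          proj_of E *m col j T = lam *: col j T) &
      ((\matrix_(j < N, i < N) (if (j < k)%N then T i j else 0)) :=: E^T)%MS].

Definition block_diag (k : nat) (M : 'M[R]_N) : Prop :=
  forall i j : 'I_N, (i < k)%N != (j < k)%N -> M i j = 0.

End Duplex.

(* Main.v *)
Require Import Defs.
From HB Require Import structures.
From mathcomp Require Import all_boot all_order all_algebra all_fingroup.
Set Implicit Arguments. Unset Strict Implicit. Unset Printing Implicit Defensive.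
Import Order.TTheory GRing.Theory Num.Theory.
Local Open Scope ring_scope.
Section Gen.
Variables (R : realFieldType) (N : nat) (gT : finType) (G : {set gT})
  (phi : gT -> 'S_N).
Hypothesis h1 : exists2 e, e \in G & phi e = 1%g.
Hypothesis hM : forall p q, p \in G -> q \in G ->
  exists2 r, r \in G & phi r = (phi p * phi q)%g.
Hypothesis hV : forall p, p \in G -> exists2 r, r \in G & phi r = (phi p)^-1%g.

Definition O (i : 'I_N) : {set 'I_N} := [set phi p i | p in G].

Lemma O_self m : m \in O m.
Proof. case: h1 => e eG e1; apply/imsetP; exists e => //; by rewrite e1 perm1. Qed.

Lemma O_inv p x a : p \in G -> (phi p x \in O a) = (x \in O a).
Proof.
move=> pG; apply/imsetP/imsetP => -[q qG Hq].
- have [v vG Hv] := hV pG.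
  have [r rG Hr] := hM qG vG.
  exists r => //; rewrite Hr Hv permM -Hq -permM mulgV perm1 //.
- have [r rG Hr] := hM qG pG.
  exists r => //; by rewrite Hr permM Hq.
Qed.

Lemma O_eq m a : m \in O a -> O a = O m.
Proof.
move=> ma; apply/setP => y; apply/idP/idP.
- case/imsetP => p pG ->; rewrite O_inv //.
  case/imsetP: ma => q qG Hm; by rewrite -(O_inv _ _ qG) -Hm O_self.
- case/imsetP => p pG ->; by rewrite O_inv.
Qed.

Variable X : 'M[R]_N.
Hypothesis hX : forall p, p \in G -> perm_mx (phi p) *m X = X *m perm_mx (phi p).

Lemma Xinv p i m : p \in G -> X (phi p i) (phi p m) = X i m.
Proof.
move=> pG; have := congr1 (fun M : 'M[R]_N => M i (phi p m)) (hX pG).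
have -> : X *m perm_mx (phi p) = X *m perm_mx ((phi p)^-1)^-1 by rewrite invgK.
rewrite -row_permE -col_permE !mxE => ->.
by rewrite permK.
Qed.

Definition P := [set O i | i : 'I_N].
Definition E := @indicator R N P.

Definition g (C : {set 'I_N}) (m : 'I_N) := \sum_i (i \in C)%:R * X i m.

Lemma g_inv a p m : p \in G -> g (O a) (phi p m) = g (O a) m.
Proof.
move=> pG; rewrite /g (reindex_inj (@perm_inj _ (phi p))) /=.
by apply: eq_bigr => i _; rewrite O_inv // Xinv.
Qed.

Lemma colspace : (E^T *m X <= E^T)%MS.
Proof.
apply/row_subP => c; rewrite row_mul.
pose a := \row_(d < #|P|) (if [pick x in enum_val d] is Some x
            then g (enum_val c) x else 0).
apply/submxP; exists a; apply/rowP => m.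
have [a0 Ha0] : exists a0, enum_val c = O a0.
  by have /imsetP [a0 _ ->] := enum_valP c; exists a0.
have Pm : O m \in P by apply/imsetP; exists m.
pose d0 := enum_rank_in Pm (O m).
have Hd0 : enum_val d0 = O m by rewrite enum_rankK_in.
have -> : (row c E^T *m X) 0 m = g (enum_val c) m.
  by rewrite !mxE /g; apply: eq_bigr => i _; rewrite !mxE.
rewrite mxE (bigD1 d0) //= big1 ?addr0.
- rewrite !mxE Hd0 O_self mulr1.
  case: pickP => [x Hx|/(_ m)]; last by rewrite O_self.
  case/imsetP: Hx => p pG ->.
  by rewrite Ha0 g_inv.
- move=> d dd0; rewrite !mxE.
  case: (boolP (m \in enum_val d)) => md; last by rewrite mulr0.
  exfalso; move/eqP: dd0; apply; apply: enum_val_inj; rewrite Hd0.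
  have /imsetP [b _ Hb] := enum_valP d.
  by rewrite Hb; apply: O_eq; rewrite -Hb.
Qed.
End Gen.
Lemma blockL (R : realFieldType) (N k : nat) (E : 'M[R]_(N, k)) (X T : 'M[R]_N) :
  X^T = X -> (E^T *m X <= E^T)%MS -> adapted_basis E T ->
  block_diag k (T^T *m X *m T).
Proof.
move=> sX hc [TT _ eqU].
set U := \matrix_(j < N, i < N) (if (j < k)%N then T i j else 0) in eqU.
have UE : (U <= E^T)%MS by rewrite ((eqU.2 _ E^T).1) submx_refl.
have half : forall i j : 'I_N, (i < k)%N -> ~~ (j < k)%N ->
    (T^T *m X *m T) i j = 0.
  move=> i j ik jk.
  have rowU : row i U = row i T^T by apply/rowP => c; rewrite !mxE ik.
  have : (row i U *m X <= E^T)%MS.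
    apply: submx_trans hc; apply: submxMr; exact: submx_trans (row_sub i U) UE.
  rewrite -((eqU.2 _ (row i U *m X)).2) => /submxP [w Hw].
  have -> : (T^T *m X *m T) i j = (row i (T^T *m X *m T)) 0 j by rewrite [RHS]mxE.
  rewrite !row_mul. rewrite -rowU. rewrite Hw. rewrite -mulmxA.
  set M := U *m T; rewrite mxE big1 // => r _; rewrite /M.
  have -> : (U *m T) r j = 0.
    rewrite mxE; case: (boolP (r < k)%N) => rk.
    - transitivity ((T^T *m T) r j).
        by rewrite mxE; apply: eq_bigr => c _; rewrite !mxE rk.
      rewrite TT mxE; case: eqP => // rj; exfalso; move: jk; by rewrite -rj rk.
    - by rewrite big1 // => c _; rewrite mxE (negbTE rk) mul0r.
  by rewrite mulr0.
move=> i j; case: (boolP (i < k)%N) => ik /=.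
- by case: (boolP (j < k)%N) => //= jk _; apply: half.
- case: (boolP (j < k)%N) => //= jk _.
  have -> : T^T *m X *m T = (T^T *m X *m T)^T by rewrite !trmx_mul trmxK sX mulmxA.
  by rewrite mxE half.
Qed.

Lemma comm_inv (R : realFieldType) (N : nat) (P Pi Q Qi X : 'M[R]_N) :
  P *m X = X *m Q -> Pi *m P = 1%:M -> Q *m Qi = 1%:M -> Pi *m X = X *m Qi.
Proof.
move=> H h1 h2.
by rewrite -[Pi *m X]mulmx1 -h2 !mulmxA -(mulmxA Pi) -H mulmxA h1 mul1mx.
Qed.

Lemma pmxV (R : realFieldType) (N : nat) (s : 'S_N) :
  (perm_mx (s^-1)%g *m perm_mx s = 1%:M :> 'M[R]_N) /\
  (perm_mx s *m perm_mx (s^-1)%g = 1%:M :> 'M[R]_N).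
Proof. by rewrite -!perm_mxM mulVg mulgV perm_mx1. Qed.

Lemma comm_mul (R : realFieldType) (N : nat) (P1 Q1 P2 Q2 X : 'M[R]_N) :
  P1 *m X = X *m Q1 -> P2 *m X = X *m Q2 -> (P1 *m P2) *m X = X *m (Q1 *m Q2).
Proof. by move=> h1 h2; rewrite -mulmxA h2 mulmxA h1 mulmxA. Qed.

Section SG.
Variables (R : realFieldType) (N : nat) (A L K : 'M[R]_N).
Let G := symgroup A L K.

Lemma sg1 : (1%g, 1%g) \in G.
Proof. by rewrite inE /= perm_mx1 !mul1mx !mulmx1 !eqxx. Qed.

Lemma sgM p q : p \in G -> q \in G -> ((p.1 * q.1)%g, (p.2 * q.2)%g) \in G.
Proof.
rewrite !inE /= => /and3P [/eqP a1 /eqP a2 /eqP a3] /and3P [/eqP b1 /eqP b2 /eqP b3].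
by rewrite !perm_mxM !(comm_mul a1 b1, comm_mul a2 b2, comm_mul a3 b3) !eqxx.
Qed.

Lemma sgV p : p \in G -> ((p.1)^-1%g, (p.2)^-1%g) \in G.
Proof.
rewrite !inE /= => /and3P [/eqP a1 /eqP a2 /eqP a3].
have [v1 w1] := pmxV R p.1; have [v2 w2] := pmxV R p.2.
by rewrite (comm_inv a1 v1 w1) (comm_inv a2 v2 w2) (comm_inv a3 v2 w1) !eqxx.
Qed.
End SG.

Theorem proposition2 (R : realFieldType) (N : nat) (A W L : 'M[R]_N)
    (kappa : 'I_N -> bool) (TT TB : 'M[R]_N) :
  (0 < N)%N ->
  is_adjacency A ->
  is_adjacency W -> L = laplacian W ->
  let K := @coupling R N kappa in
  let ET := @indicator R N (clustersT A L K) in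
  let EB := @indicator R N (clustersB A L K) in
  adapted_basis ET TT ->
  adapted_basis EB TB ->
  block_diag #|clustersT A L K| (TT^T *m A *m TT) /\
  block_diag #|clustersB A L K| (TB^T *m L *m TB).
Proof.
move=> _ [sA _] [sW _] HL K ET EB hT hB.
set G := symgroup A L K.
have h1 : forall (phi : 'S_N * 'S_N -> 'S_N), phi = fst \/ phi = snd ->
    exists2 e, e \in G & phi e = 1%g.
  by move=> phi [->|->]; exists (1%g, 1%g) => //; apply: sg1.
have hM : forall (phi : 'S_N * 'S_N -> 'S_N), phi = fst \/ phi = snd ->
    forall p q, p \in G -> q \in G ->
    exists2 r, r \in G & phi r = (phi p * phi q)%g.
  by move=> phi [->|->] p q pG qG; exists ((p.1 * q.1)%g, (p.2 * q.2)%g) => //;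
     apply: sgM.
have hV : forall (phi : 'S_N * 'S_N -> 'S_N), phi = fst \/ phi = snd ->
    forall p, p \in G -> exists2 r, r \in G & phi r = (phi p)^-1%g.
  by move=> phi [->|->] p pG; exists ((p.1)^-1%g, (p.2)^-1%g) => //; apply: sgV.
split.
- apply: blockL sA _ hT.
  have hX : forall p, p \in G -> perm_mx (fst p) *m A = A *m perm_mx (fst p).
    by move=> p; rewrite inE => /and3P [/eqP -> _ _].
  exact: (colspace (h1 _ (or_introl erefl)) (hM _ (or_introl erefl))
     (hV _ (or_introl erefl)) hX).
- have sL : L^T = L.
    by rewrite HL /laplacian linearB /= tr_diag_mx sW.
  apply: blockL sL _ hB.
  have hX : forall p, p \in G -> perm_mx (snd p) *m L = L *m perm_mx (snd p).
    by move=> p; rewrite inE => /and3P [_ /eqP -> _].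
  exact: (colspace (h1 _ (or_intror erefl)) (hM _ (or_intror erefl))
     (hV _ (or_intror erefl)) hX).
Qed.
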